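(* Let $G$ be a finite group, let $\chi$ be an irreducible complex character of $G$, and write $\chi\otimes\bar\chi=a_1\chi_1+\cdots+a_q\chi_q$, where the $a_i$ are positive integers and the $\chi_i$ are irreducible characters of $G$ of dimensions $n_i=\chi_i(1)$, $i=1,\dots,q$. Then for every $g\in G$, $$c(g)\le\frac{(a_1/n_1^2)\chi_1(g)+\cdots+(a_q/n_q^2)\chi_q(g)}{a_1n_1+\cdots+a_qn_q},$$ and therefore $$c(G)\le\frac{a_1/n_1+\cdots+a_q/n_q}{a_1n_1+\cdots+a_qn_q}.$$
   Context: For $g\in G$, $c(g)=|\{(x,y)\in G\times G:[x,y]=g\}|/|G|^2$, and $c(G)=c(1)$. $\bar\chi$ denotes the complex conjugate character. *)

(* Defs.v *)
From HB Require Import structures.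
From mathcomp Require Import all_boot all_order all_algebra all_fingroup all_solvable all_field all_character.
Set Implicit Arguments. Unset Strict Implicit. Unset Printing Implicit Defensive.
Import Order.TTheory GRing.Theory Num.Theory.

Definition commut_prob_elt (gT : finGroupType) (G : {group gT}) (g : gT) : algC :=
  (#|[set xy in setX G G | ([~ xy.1, xy.2])%g == g]|%:R / (#|G| ^ 2)%:R)%R.

Definition commut_prob (gT : finGroupType) (G : {group gT}) : algC :=
  commut_prob_elt G 1%g.

(* Main.v *)
Require Import Defs.
From HB Require Import structures.
From mathcomp Require Import all_boot all_order all_algebra all_fingroup all_solvable all_field all_character.
From mathcomp Require Import ring.
Import Order.TTheory GRing.Theory Num.Theory.
Local Open Scope ring_scope.

Lemma sum_conj_irr (gT : finGroupType) (G : {group gT}) (i : Iirr G) a b :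
  a \in G -> b \in G ->
  \sum_(y in G) 'chi_i (a * b ^ y)%g = #|G|%:R * 'chi_i b / 'chi_i 1%g * 'chi_i a.
Proof.
move=> Ga Gb.
set rG := 'Chi_i.
have chiE x : x \in G -> 'chi_i x = \tr (rG x).
  by move=> Gx; rewrite -irrRepr cfunE Gx mulr1n.
set N := \sum_(y in G) rG (b ^ y)%g.
have cN : centgmx rG N.
  apply/centgmxP => z Gz; rewrite /N mulmx_suml mulmx_sumr.
  rewrite [RHS](reindex_inj (mulIg z)) /=.
  apply: eq_big => [y|y Gy]; first by rewrite groupMr.
  rewrite -!repr_mxM ?groupJ ?groupM //; congr (rG _).
  by rewrite [LHS]conjgC -conjgM.
have absG : mx_absolutely_irreducible rG.
  by apply: groupC; apply: socle_irr.
have [c Nc] := is_scalar_mxP (mx_abs_irr_cent_scalar absG cN).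
have n1 : 'chi_i 1%g = (irr_degree (socle_of_Iirr i))%:R.
  by rewrite -irrRepr cfRepr1.
have trN : \tr N = #|G|%:R * 'chi_i b.
  rewrite /N raddf_sum /= (eq_bigr (fun=> 'chi_i b)); first by rewrite sumr_const mulr_natl.
  by move=> y Gy; rewrite -chiE ?groupJ // cfunJ.
have cE : c = #|G|%:R * 'chi_i b / 'chi_i 1%g.
  rewrite -trN Nc mxtrace_scalar n1 -[c *+ _]mulr_natr mulfK //.
  by rewrite -n1 irr1_neq0.
rewrite -cE (chiE a) // -mxtraceZ -mul_mx_scalar -Nc /N mulmx_sumr raddf_sum.
apply: eq_bigr => y Gy; rewrite chiE ?groupM ?groupJ ?groupV //.
by rewrite (repr_mxM rG Ga (groupJ Gb Gy)).

Qed.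
Lemma cfunC (gT : finGroupType) (G : {group gT}) (phi : 'CF(G)) u v :
  u \in G -> phi (u * v)%g = phi (v * u)%g.
Proof. by move=> Gu; rewrite -(cfunJ phi (u * v)%g Gu) conjgE -mulgA mulKg. Qed.

Lemma sum_comm_irr (gT : finGroupType) (G : {group gT}) (i : Iirr G) g :
  g \in G ->
  \sum_(x in G) \sum_(y in G) 'chi_i ([~ x, y] * g)%g
    = #|G|%:R ^+ 2 * 'chi_i g / 'chi_i 1%g ^+ 2.
Proof.
move=> Gg.
have nz1 := irr1_neq0 i.
have S1 : \sum_(x in G) 'chi_i (x * g)%g * 'chi_i x^-1%g
          = #|G|%:R * ('chi_i g / 'chi_i 1%g).
  have := generalized_orthogonality_relation g i i.
  by rewrite eqxx mul1r => /(canRL (mulVKf (neq0CG G))).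
transitivity (\sum_(x in G) #|G|%:R * 'chi_i x / 'chi_i 1%g * 'chi_i (g * x^-1)%g).
  apply: eq_bigr => x Gx; rewrite -sum_conj_irr ?groupM ?groupV //.
  apply: eq_bigr => y Gy.
  by rewrite commgEl (@cfunC _ _ _ (x^-1 * x ^ y)%g) ?groupM ?groupV ?groupJ // mulgA.
transitivity (#|G|%:R / 'chi_i 1%g * \sum_(x in G) 'chi_i (x * g)%g * 'chi_i x^-1%g).
  rewrite big_distrr /= [in RHS](reindex_inj invg_inj) /=.
  apply: eq_big => [x|x Gx]; first by rewrite groupV.
  rewrite invgK (@cfunC _ _ _ g) //; ring.
rewrite S1; field; exact: nz1.
Qed.
Lemma count_bound (gT : finGroupType) (G : {group gT}) (f : gT -> algC) g :
  (forall h, 0 <= f h) ->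
  #|[set xy in setX G G | ([~ xy.1, xy.2])%g == g]|%:R * f 1%g
    <= \sum_(x in G) \sum_(y in G) f ([~ x, y] * g)%g.
Proof.
move=> f0.
rewrite exchange_big pair_big /=.
rewrite (eq_bigl (fun p => p \in setX G G)); last by move=> p; rewrite inE.
rewrite (bigID (fun p : gT * gT => ([~ p.1, p.2])%g == g)) /=.
rewrite -[X in X <= _]addr0 lerD ?sumr_ge0 //.
rewrite (eq_bigr (fun _ => f 1%g)); last first.
  by move=> p /andP[_ /eqP e]; rewrite -invgR e mulVg.
rewrite sumr_const mulr_natl cardsE.
by [].
Qed.

Theorem corollary5 (gT : finGroupType) (G : {group gT}) (i : Iirr G)
    (a : Iirr G -> nat) :
  'chi_i * (('chi_i)^*)%CF = \sum_(j : Iirr G) (a j)%:R *: 'chi_j ->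
  (forall g : gT, g \in G ->
     commut_prob_elt G g <=
       (\sum_(j : Iirr G | (0 < a j)%N) (a j)%:R / ('chi_j 1%g) ^+ 2 * 'chi_j g)
       / (\sum_(j : Iirr G | (0 < a j)%N) (a j)%:R * 'chi_j 1%g))
  /\
  commut_prob G <=
    (\sum_(j : Iirr G | (0 < a j)%N) (a j)%:R / 'chi_j 1%g)
    / (\sum_(j : Iirr G | (0 < a j)%N) (a j)%:R * 'chi_j 1%g).
Proof.
move=> H.
set th := 'chi_i * (('chi_i)^*)%CF.
have thE h : th h = `|'chi_i h| ^+ 2 by rewrite /th !cfunE ?cfConjCE normCK.
have th0 h : 0 <= th h by rewrite thE exprn_ge0.
have thS h : th h = \sum_j (a j)%:R * 'chi_j h.
  by rewrite /th H sum_cfunE; apply: eq_bigr => j _; rewrite cfunE.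
have n2E : \sum_(j | (0 < a j)%N) (a j)%:R * 'chi_j 1%g = 'chi_i 1%g ^+ 2.
  rewrite -[RHS]ger0_norm ?exprn_ge0 ?ltW ?irr1_gt0 // normrX -thE thS.
  rewrite big_mkcond /=; apply: eq_bigr => j _.
  by case: (a j) => [|k] //=; rewrite mul0r.
have n2gt0 : 0 < 'chi_i 1%g ^+ 2 by rewrite exprn_gt0 ?irr1_gt0.
have key g : g \in G -> \sum_(x in G) \sum_(y in G) th ([~ x, y] * g)%g
   = #|G|%:R ^+ 2 * \sum_(j | (0 < a j)%N) (a j)%:R / ('chi_j 1%g) ^+ 2 * 'chi_j g.
  move=> Gg.
  under eq_bigr do under eq_bigr do rewrite thS.
  under eq_bigr do rewrite exchange_big /=.
  rewrite exchange_big /= mulr_sumr [RHS]big_mkcond /=; apply: eq_bigr => j _.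
  under eq_bigr do rewrite -mulr_sumr.
  rewrite -mulr_sumr sum_comm_irr //.
  case: (a j) => [|k] /=; first by rewrite mul0r.
  field; exact: irr1_neq0.
have part1 g : g \in G ->
     commut_prob_elt G g <=
       (\sum_(j : Iirr G | (0 < a j)%N) (a j)%:R / ('chi_j 1%g) ^+ 2 * 'chi_j g)
       / (\sum_(j : Iirr G | (0 < a j)%N) (a j)%:R * 'chi_j 1%g).
  move=> Gg; rewrite n2E /commut_prob_elt.
  have G2 : 0 < (#|G| ^ 2)%:R :> algC by rewrite ltr0n expn_gt0 cardG_gt0.
  rewrite ler_pdivrMr // mulrAC ler_pdivlMr //.
  have := @count_bound _ G th g th0.
  rewrite key // thE (ger0_norm (ltW (irr1_gt0 i))) natrX.
  by rewrite [X in _ <= X]mulrC.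
split=> //.
have := part1 1%g (group1 G).
rewrite /commut_prob => /le_trans; apply.
rewrite ler_pM2r ?invr_gt0 ?n2E //.
rewrite le_eqVlt; apply/orP; left; apply/eqP.
apply: eq_bigr => j _; field; exact: irr1_neq0.
Qed.
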